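(* Let $\mathbb F$ be an algebraically closed field and $\mathbf z=(z_1,\dots,z_n)$ indeterminates. If a polynomial map $L=(L_1,\dots,L_m):\mathbb F^n\to\mathbb F^m$ is not $(r,d)$-elusive, then there exist $p_1(\mathbf z),\dots,p_r(\mathbf z)\in\overline{\mathbb F(\mathbf z)}$ such that $L_i(\mathbf z)\in d\text{-}\mathrm{span}(p_1(\mathbf z),\dots,p_r(\mathbf z))$ for every $i=1,\dots,m$.
   Context: A polynomial map $M=(M_1,\dots,M_m)$ has degree $d$ if each $M_i$ is a polynomial of degree at most $d$. $L:\mathbb F^n\to\mathbb F^m$ is $(r,d)$-elusive if for every polynomial map $M:\mathbb F^r\to\mathbb F^m$ of degree $d$, $\mathrm{im}(L)\not\subseteq\mathrm{im}(M)$. For $p_1,\dots,p_r\in\overline{\mathbb F(\mathbf z)}$, $d\text{-}\mathrm{span}(p_1,\dots,p_r)$ is the $\mathbb F$-linear span of all products $p_1^{e_1}\cdots p_r^{e_r}$ with $e_i\in\mathbb N$, $\sum_ie_i\le d$. *)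

(* Defs.v *)
From HB Require Import structures.
From mathcomp Require Import all_boot all_order all_algebra.
Set Implicit Arguments. Unset Strict Implicit. Unset Printing Implicit Defensive.
Import GRing.Theory.
Local Open Scope ring_scope.

(* A polynomial in n variables over F, all of whose exponents are <= D:
   the coefficient of the monomial prod_i z_i^(e i) is c e. Every polynomial
   has such a representation for D large enough. *)
Definition mpoly (F : Type) (n D : nat) := {ffun {ffun 'I_n -> 'I_D.+1} -> F}.

Definition mdeg (n D : nat) (e : {ffun 'I_n -> 'I_D.+1}) : nat :=
  (\sum_(i < n) (e i : nat))%N.

Definition deg_le (F : nzRingType) (n D : nat) (c : mpoly F n D) (d : nat) : Prop :=
  forall e, (d < mdeg e)%N -> c e = 0.

Definition meval (F A : comNzRingType) (iota : F -> A) (n D : nat)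
  (c : mpoly F n D) (x : 'I_n -> A) : A :=
  \sum_(e : {ffun 'I_n -> 'I_D.+1}) iota (c e) * \prod_(i < n) x i ^+ (e i : nat).

Definition peval (F : comNzRingType) (n D : nat) (c : mpoly F n D) (x : 'I_n -> F) : F :=
  meval id c x.

Definition im_sub (F : comNzRingType) (n m r DL DM : nat)
  (L : 'I_m -> mpoly F n DL) (M : 'I_m -> mpoly F r DM) : Prop :=
  forall x : 'I_n -> F, exists y : 'I_r -> F, forall i, peval (M i) y = peval (L i) x.

Definition elusive (F : comNzRingType) (n m DL : nat) (L : 'I_m -> mpoly F n DL)
  (r d : nat) : Prop :=
  forall M : 'I_m -> mpoly F r d, (forall i, deg_le (M i) d) -> ~ im_sub L M.

(* x lies in d-span(p_1,...,p_r) : an F-linear combination of products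
   p_1^e_1 ... p_r^e_r with e_1 + ... + e_r <= d *)
Definition dspan (F K : comNzRingType) (iota : F -> K) (r d : nat)
  (p : 'I_r -> K) (x : K) : Prop :=
  exists c : mpoly F r d, deg_le c d /\ x = meval iota c p.

Definition alg_indep (F K : comNzRingType) (iota : F -> K) (n : nat) (z : 'I_n -> K) : Prop :=
  forall D (c : mpoly F n D), meval iota c z = 0 -> c = 0.

(* every element of K is algebraic over F(z_1,...,z_n)
   (denominators cleared: root of a nonzero polynomial with coefficients in F[z]) *)
Definition algebraic_over_Fz (F K : fieldType) (iota : F -> K) (n : nat) (z : 'I_n -> K) : Prop :=
  forall k : K, exists q : {poly K},
    [/\ q != 0, root q k & forall j : nat, exists D (c : mpoly F n D), q`_j = meval iota c z].

(* (K, iota, z) is an algebraic closure of the rational function field F(z_1..z_n):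
   K algebraically closed (by its type), iota : F -> K a field embedding,
   z algebraically independent over F, and K algebraic over F(z). *)
Definition is_alg_closure_Fz (F : fieldType) (K : closedFieldType)
  (iota : {rmorphism F -> K}) (n : nat) (z : 'I_n -> K) : Prop :=
  alg_indep iota z /\ algebraic_over_Fz iota z.

(* Main.v *)
From HB Require Import structures.
From mathcomp Require Import all_boot all_order all_algebra closed_field mpoly.
From Stdlib Require Import Classical.
Require Import Defs.
Set Implicit Arguments. Unset Strict Implicit. Unset Printing Implicit Defensive.
Import GRing.Theory.
Local Open Scope ring_scope.

Section MapForm.
Variables (F K : Type) (f : F -> K).

Fixpoint mt (t : GRing.term F) : GRing.term K :=
  match t with
  | GRing.Var i => GRing.Var _ i
  | GRing.Const x => GRing.Const (f x)
  | GRing.NatConst n => GRing.NatConst _ n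
  | GRing.Add a b => GRing.Add (mt a) (mt b)
  | GRing.Opp a => GRing.Opp (mt a)
  | GRing.NatMul a n => GRing.NatMul (mt a) n
  | GRing.Mul a b => GRing.Mul (mt a) (mt b)
  | GRing.Inv a => GRing.Inv (mt a)
  | GRing.Exp a n => GRing.Exp (mt a) n
  end.

Fixpoint mf (g : GRing.formula F) : GRing.formula K :=
  match g with
  | GRing.Bool b => GRing.Bool b
  | GRing.Equal a b => GRing.Equal (mt a) (mt b)
  | GRing.Unit a => GRing.Unit (mt a)
  | GRing.And a b => GRing.And (mf a) (mf b)
  | GRing.Or a b => GRing.Or (mf a) (mf b)
  | GRing.Implies a b => GRing.Implies (mf a) (mf b)
  | GRing.Not a => GRing.Not (mf a)
  | GRing.Exists i a => GRing.Exists i (mf a)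
  | GRing.Forall i a => GRing.Forall i (mf a)
  end.

Definition mp := map mt.
End MapForm.

Section Natur.
Variables (F K : fieldType) (f : F -> K).
Local Notation mt := (mt f).
Local Notation mf := (mf f).
Local Notation mp := (mp f).
Import ClosedFieldQE.

Definition natc A B (h : A -> B) (x : (A -> GRing.formula F) -> GRing.formula F)
  (y : (B -> GRing.formula K) -> GRing.formula K) :=
  forall kF kK, (forall a, kK (h a) = mf (kF a)) -> y kK = mf (x kF).

Lemma natc_ret A B (h : A -> B) a : natc h (ret a) (ret (h a)).
Proof. rewrite /natc => kF kK H /=. exact: H. Qed.

Lemma natc_bind A B C D (h : A -> B) (h' : C -> D) x y g g' :
  natc h x y -> (forall a, natc h' (g a) (g' (h a))) ->
  natc h' (bind x g) (bind y g').
Proof. rewrite /natc => Hx Hg kF kK H /=; apply: Hx => a; exact: Hg. Qed.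

Lemma natc_if A B (h : A -> B) c a b :
  natc h (cpsif c a b) (cpsif (mf c) (h a) (h b)).
Proof. by rewrite /natc => kF kK H; rewrite /cpsif /GRing.If /= !H. Qed.

Lemma natc_ret' A B (h : A -> B) a y : y = h a -> natc h (ret a) (ret y).
Proof. move=> ->; exact: natc_ret. Qed.

Lemma natc_ext A B (h : A -> B) x y y' : natc h x y -> y = y' -> natc h x y'.
Proof. by move=> ? <-. Qed.

Lemma sizeT_nat p : natc id (sizeT p) (sizeT (mp p)).
Proof.
elim: p => [|c p IH] /=; first exact: natc_ret.
apply: natc_bind IH _ => -[|k] /=; last exact: natc_ret.
exact: (@natc_if _ _ id (GRing.Equal c (GRing.NatConst _ 0%N)) 0%N 1%N).
Qed.

Lemma isnull_nat p : natc id (isnull p) (isnull (mp p)).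
Proof. apply: natc_bind (sizeT_nat p) _ => k; exact: natc_ret. Qed.

Lemma lt_sizeT_nat p q : natc id (lt_sizeT p q) (lt_sizeT (mp p) (mp q)).
Proof.
apply: natc_bind (sizeT_nat p) _ => k; apply: natc_bind (sizeT_nat q) _ => l.
exact: natc_ret.
Qed.

Lemma lead_coefT_nat p : natc mt (lead_coefT p) (lead_coefT (mp p)).
Proof.
elim: p => [|c p IH] /=.
  exact: natc_ret.
apply: natc_bind IH _ => l.
exact: natc_if.
Qed.

Lemma amulXnT_nat a n : mp (amulXnT a n) = amulXnT (mt a) n.
Proof. by elim: n => //= n ->. Qed.

Lemma sumpT_nat p q : mp (sumpT p q) = sumpT (mp p) (mp q).
Proof. by elim: p q => [|a p IH] [|b q] //=; rewrite IH. Qed.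

Lemma mulpT_nat p q : mp (mulpT p q) = mulpT (mp p) (mp q).
Proof.
elim: p => [|a p IH] //=; rewrite sumpT_nat /= IH; congr sumpT.
by rewrite /mp -!map_comp.
Qed.

Lemma opppT_nat p : mp (opppT p) = opppT (mp p).
Proof. by rewrite /mp /opppT -!map_comp. Qed.

Lemma natmulpT_nat n p : mp (natmulpT n p) = natmulpT n (mp p).
Proof. by rewrite /mp /natmulpT -!map_comp. Qed.

Definition hr (x : nat * polyF F * polyF F) : nat * polyF K * polyF K :=
  (x.1.1, mp x.1.2, mp x.2).

Lemma redivp_rec_loopT_nat q sq cq c qq r n :
  natc hr (redivp_rec_loopT q sq cq c qq r n)
    (redivp_rec_loopT (mp q) sq (mt cq) c (mp qq) (mp r) n).
Proof.
elim: n c qq r => [|n IH] c qq r /=.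
  apply: natc_bind (sizeT_nat r) _ => sr /=.
  case: ifP => _; first exact: (@natc_ret _ _ hr (c, qq, r)).
  apply: natc_bind (lead_coefT_nat r) _ => lr.
  apply: natc_ret'.
  by rewrite /hr /= !sumpT_nat !mulpT_nat opppT_nat mulpT_nat amulXnT_nat.
apply: natc_bind (sizeT_nat r) _ => sr /=.
case: ifP => _; first exact: (@natc_ret _ _ hr (c, qq, r)).
apply: natc_bind (lead_coefT_nat r) _ => lr.
apply: natc_ext; first exact: IH.
by rewrite /= !sumpT_nat !mulpT_nat opppT_nat mulpT_nat amulXnT_nat.
Qed.

Lemma redivpT_nat p q : natc hr (redivpT p q) (redivpT (mp p) (mp q)).
Proof.
apply: natc_bind (isnull_nat q) _ => -[] /=.
  exact: (@natc_ret _ _ hr (0%N, [:: GRing.NatConst _ 0%N], p)).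
apply: natc_bind (sizeT_nat q) _ => sq.
apply: natc_bind (sizeT_nat p) _ => sp.
apply: natc_bind (lead_coefT_nat q) _ => lq.
exact: (@redivp_rec_loopT_nat q sq lq 0%N [:: GRing.NatConst _ 0%N] p sp).
Qed.

Lemma rmodpT_nat p q : natc mp (rmodpT p q) (rmodpT (mp p) (mp q)).
Proof. apply: natc_bind (redivpT_nat p q) _ => x; exact: natc_ret. Qed.

Lemma rdivpT_nat p q : natc mp (rdivpT p q) (rdivpT (mp p) (mp q)).
Proof. apply: natc_bind (redivpT_nat p q) _ => x; exact: natc_ret. Qed.

Lemma rgcdp_loopT_nat n pp qq :
  natc mp (rgcdp_loopT n pp qq) (rgcdp_loopT n (mp pp) (mp qq)).
Proof.
elim: n pp qq => [|n IH] pp qq /=.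
  apply: natc_bind (rmodpT_nat pp qq) _ => rr.
  apply: natc_bind (isnull_nat rr) _ => -[]; exact: natc_ret.
apply: natc_bind (rmodpT_nat pp qq) _ => rr.
apply: natc_bind (isnull_nat rr) _ => -[]; [exact: natc_ret | exact: IH].
Qed.

Lemma rgcdpT_nat p q : natc mp (rgcdpT p q) (rgcdpT (mp p) (mp q)).
Proof.
apply: natc_bind (lt_sizeT_nat p q) _ => -[] /=.
  apply: natc_bind (isnull_nat q) _ => -[]; first exact: natc_ret.
  apply: natc_bind (sizeT_nat q) _ => k; exact: rgcdp_loopT_nat.
apply: natc_bind (isnull_nat p) _ => -[]; first exact: natc_ret.
apply: natc_bind (sizeT_nat p) _ => k; exact: rgcdp_loopT_nat.
Qed.

Lemma rgcdpTs_nat ps : natc mp (rgcdpTs ps) (rgcdpTs (map mp ps)).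
Proof.
elim: ps => [|p ps IH] /=.
  exact: (@natc_ret _ _ mp [:: GRing.NatConst _ 0%N]).
apply: natc_bind IH _ => pr; exact: rgcdpT_nat.
Qed.

Lemma rgdcop_recT_nat n q p :
  natc mp (rgdcop_recT n q p) (rgdcop_recT n (mp q) (mp p)).
Proof.
elim: n q p => [|n IH] q p /=.
  apply: natc_bind (isnull_nat q) _ => b.
  exact: (@natc_ret _ _ mp [:: GRing.NatConst _ b]).
apply: natc_bind (rgcdpT_nat p q) _ => g.
apply: natc_bind (sizeT_nat g) _ => sg /=.
case: ifP => _; first exact: natc_ret.
apply: natc_bind (rdivpT_nat p g) _ => r'; exact: IH.
Qed.

Lemma rgdcopT_nat q p : natc mp (rgdcopT q p) (rgdcopT (mp q) (mp p)).
Proof.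
apply: natc_bind (sizeT_nat p) _ => sp; exact: rgdcop_recT_nat.
Qed.

Lemma ex_elim_seq_nat ps q :
  mf (ex_elim_seq ps q) = ex_elim_seq (map mp ps) (mp q).
Proof.
symmetry; rewrite /ex_elim_seq.
apply: (natc_bind (rgcdpTs_nat ps)) => [g|]; last by [].
apply: natc_bind (rgdcopT_nat q g) _ => d'.
apply: natc_bind (sizeT_nat d') _ => k; exact: natc_ret.
Qed.

Lemma abstrX_nat i t : mp (abstrX i t) = abstrX i (mt t).
Proof.
elim: t => //=.
- by move=> j; case: eqP.
- by move=> t1 IH1 t2 IH2; rewrite sumpT_nat IH1 IH2.
- by move=> t1 IH1; rewrite opppT_nat IH1.
- by move=> t1 IH1 k; rewrite natmulpT_nat IH1.
- by move=> t1 IH1 t2 IH2; rewrite mulpT_nat IH1 IH2.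
- move=> t1 IH1 k; elim: k => //= k IHk.
  by rewrite mulpT_nat IH1 IHk.
Qed.

Lemma ex_elim_nat x ps qs :
  mf (ex_elim x (ps, qs)) = ex_elim x (mp ps, mp qs).
Proof.
rewrite /ex_elim /= ex_elim_seq_nat abstrX_nat -map_comp.
congr (ex_elim_seq _ (abstrX _ _)).
  by rewrite /mp -map_comp; apply: eq_map => t /=; exact: abstrX_nat.
rewrite /mp (@big_morph _ _ mt (GRing.NatConst _ 1%N) GRing.Mul
   (GRing.NatConst _ 1%N) GRing.Mul (fun _ _ => erefl) erefl).
by rewrite big_map.
Qed.

Definition md (bc : seq (GRing.term F) * seq (GRing.term F)) := (mp bc.1, mp bc.2).

Lemma and_dnf_nat a b :
  map md (GRing.and_dnf a b) = GRing.and_dnf (map md a) (map md b).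
Proof.
elim: a => [|x a IH]; first by rewrite /GRing.and_dnf !big_nil.
rewrite /GRing.and_dnf /= !big_cons -/(GRing.and_dnf a b) -/(GRing.and_dnf _ _).
rewrite map_cat IH -!map_comp; congr (_ ++ _).
by apply: eq_map => y /=; rewrite /md /mp /= !map_cat.
Qed.

Lemma qf_to_dnf_nat g b : map md (GRing.qf_to_dnf g b) = GRing.qf_to_dnf (mf g) b.
Proof.
elim: g b => /=.
- by move=> c b; case: (c (+) b).
- by move=> t1 t2 [].
- by move=> t [].
- by move=> g1 IH1 g2 IH2 [] /=; rewrite ?map_cat ?and_dnf_nat IH1 IH2.
- by move=> g1 IH1 g2 IH2 [] /=; rewrite ?map_cat ?and_dnf_nat IH1 IH2.
- by move=> g1 IH1 g2 IH2 [] /=; rewrite ?map_cat ?and_dnf_nat IH1 IH2.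
- by move=> g1 IH1 b; rewrite IH1.
- by move=> i g1 IH1 [].
- by move=> i g1 IH1 [].
Qed.

Lemma foldr_or_nat l : mf (foldr GRing.Or (GRing.Bool false) l) =
  foldr GRing.Or (GRing.Bool false) (map mf l).
Proof. by elim: l => //= x l ->. Qed.

Lemma qe_nat g : mf (GRing.quantifier_elim (@ex_elim F) g) =
  GRing.quantifier_elim (@ex_elim K) (mf g).
Proof.
elim: g => //=.
- by move=> g1 -> g2 ->.
- by move=> g1 -> g2 ->.
- by move=> g1 -> g2 ->.
- by move=> g1 ->.
- move=> i g1 IH; rewrite foldr_or_nat -map_comp -IH -qf_to_dnf_nat -map_comp.
  by congr foldr; apply: eq_map => -[ps qs] /=; rewrite ex_elim_nat.
- move=> i g1 IH; rewrite foldr_or_nat -map_comp -IH.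
  rewrite -qf_to_dnf_nat -map_comp.
  by congr (GRing.Not (foldr _ _ _)); apply: eq_map => -[ps qs] /=; rewrite ex_elim_nat.
Qed.

End Natur.

Section Transfer.
Variables (F K : fieldType) (iota : {rmorphism F -> K}).
Local Notation mt := (mt iota).
Local Notation mf := (mf iota).

Lemma nth_map_iota (e : seq F) i : nth 0 (map iota e) i = iota (nth 0 e i).
Proof. elim: e i => [|x e IH] [|i] //=; by rewrite rmorph0. Qed.

Lemma eval_nat e t : GRing.eval (map iota e) (mt t) = iota (GRing.eval e t).
Proof.
elim: t => /=.
- by move=> i; rewrite nth_map_iota.
- by [].
- by move=> k; rewrite rmorph_nat.
- by move=> t1 -> t2 ->; rewrite rmorphD.
- by move=> t1 ->; rewrite rmorphN.
- by move=> t1 -> k; rewrite rmorphMn.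
- by move=> t1 -> t2 ->; rewrite rmorphM.
- by move=> t1 ->; rewrite fmorphV.
- by move=> t1 -> k; rewrite rmorphXn.
Qed.

Lemma qf_eval_nat e g : GRing.qf_eval (map iota e) (mf g) = GRing.qf_eval e g.
Proof.
elim: g => //=.
- by move=> t1 t2; rewrite !eval_nat (inj_eq (fmorph_inj iota)).
- by move=> t; rewrite eval_nat !unitfE fmorph_eq0.
- by move=> g1 -> g2 ->.
- by move=> g1 -> g2 ->.
- by move=> g1 -> g2 ->.
- by move=> g1 ->.
Qed.

Lemma rterm_nat t : GRing.rterm (mt t) = GRing.rterm t.
Proof. by elim: t => //= t1 -> t2 ->. Qed.

Lemma rformula_nat g : GRing.rformula (mf g) = GRing.rformula g.
Proof. by elim: g => //= [t1 t2|g1 -> g2 ->|g1 -> g2 ->|g1 -> g2 ->]; rewrite ?rterm_nat. Qed.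

End Transfer.

Section Transfer2.
Variables (F K : closedFieldType) (iota : {rmorphism F -> K}).

Lemma transfer e g : GRing.rformula g ->
  GRing.holds e g <-> GRing.holds (map iota e) (mf iota g).
Proof.
move=> rg.
have HF := GRing.quantifier_elim_rformP (@ClosedFieldQE.wf_ex_elim F)
  (ClosedFieldQE.holds_ex_elim (@solve_monicpoly F)).
have HK := GRing.quantifier_elim_rformP (@ClosedFieldQE.wf_ex_elim K)
  (ClosedFieldQE.holds_ex_elim (@solve_monicpoly K)).
have rg' : GRing.rformula (mf iota g) by rewrite rformula_nat.
split.
  move=> /(HF e g rg) h; apply/(HK _ _ rg'); rewrite -qe_nat qf_eval_nat //.
move=> /(HK _ _ rg') h; apply/(HF e g rg); rewrite -qe_nat qf_eval_nat // in h.
Qed.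
End Transfer2.

Section Conv.
Variables (F : fieldType) (n : nat).

Fixpoint P (t : GRing.term F) : {mpoly F[n]} :=
  match t with
  | GRing.Var i => if insub i is Some j then 'X_j else 0
  | GRing.Const x => x%:MP
  | GRing.NatConst k => k%:R
  | GRing.Add a b => P a + P b
  | GRing.Opp a => - P a
  | GRing.NatMul a k => P a *+ k
  | GRing.Mul a b => P a * P b
  | GRing.Inv a => 0
  | GRing.Exp a k => P a ^+ k
  end.

Lemma evalP (A : fieldType) (g : {rmorphism F -> A}) (es : seq A) t :
  size es = n -> GRing.rterm t ->
  GRing.eval es (mt g t) = mmap g (fun i : 'I_n => nth 0 es i) (P t).
Proof.
move=> Hs; elim: t => /=.
- move=> i _; case: insubP => [j Hi Hj|Hi].
    by rewrite mmapX mmap1U Hj.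
  by rewrite nth_default ?mmap0 // Hs leqNgt.
- by move=> x _; rewrite mmapC.
- by move=> k _; rewrite rmorph_nat.
- by move=> t1 IH1 t2 IH2 /andP[/IH1 -> /IH2 ->]; rewrite rmorphD.
- by move=> t1 IH1 /IH1 ->; rewrite rmorphN.
- by move=> t1 IH1 k /IH1 ->; rewrite rmorphMn.
- by move=> t1 IH1 t2 IH2 /andP[/IH1 -> /IH2 ->]; rewrite rmorphM.
- by [].
- by move=> t1 IH1 k /IH1 ->; rewrite rmorphXn.
Qed.

Definition mn D (e : {ffun 'I_n -> 'I_D.+1}) : 'X_{1..n} := [multinom (e i : nat) | i < n].

Definition conv (p : {mpoly F[n]}) : {ffun {ffun 'I_n -> 'I_(msize p).+1} -> F} :=
  [ffun e => p@_(mn e)].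

Lemma mnm_le_mdeg (m : 'X_{1..n}) i : (m i <= mathcomp.multinomials.mpoly.mdeg m)%N.
Proof. by rewrite mdegE (bigD1 i) //= leq_addr. Qed.

Lemma conv_meval (A : fieldType) (g : {rmorphism F -> A}) (w : 'I_n -> A) p :
  meval g (conv p) w = mmap g w p.
Proof.
set D := msize p.
pose G (m : 'X_{1..n}) := g p@_m * mmap1 w m.
have HL : meval g (conv p) w = \sum_(e : {ffun 'I_n -> 'I_D.+1}) G (mn e).
  apply: eq_bigr => e _; rewrite ffunE /G /mmap1; congr (_ * _).
  by apply: eq_bigr => i _; rewrite /mn mnmE.
rewrite HL /mmap -/G.
pose e0 (m : 'X_{1..n}) : {ffun 'I_n -> 'I_D.+1} := [ffun i => inord (m i)].
have He0 m : m \in msupp p -> forall e : {ffun 'I_n -> 'I_D.+1}, (mn e == m) = (e == e0 m).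
  move=> Hm e; have Hlt i : (m i < D.+1)%N.
    by apply: leq_ltn_trans (mnm_le_mdeg m i) _; rewrite ltnS ltnW // msize_mdeg_lt.
  apply/eqP/eqP => [<-|->].
    by apply/ffunP => i; rewrite ffunE; apply: val_inj; rewrite /= /mn mnmE inordK.
  by apply/mnmP => i; rewrite /mn mnmE ffunE inordK.
transitivity (\sum_(m <- msupp p) \sum_(e : {ffun 'I_n -> 'I_D.+1})
    (if mn e == m then G m else 0)); last first.
  apply: eq_big_seq => m Hm; rewrite -big_mkcond /=.
  rewrite (eq_bigl (fun e => e == e0 m)); first by rewrite big_pred1_eq.
  by move=> e; rewrite He0.
rewrite exchange_big /=; apply: eq_bigr => e _.
case Hin: (mn e \in msupp p).
  rewrite (bigD1_seq (mn e)) ?msupp_uniq //= eqxx big1_seq ?addr0 //.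
  by move=> m /andP[Hne _]; rewrite eq_sym (negbTE Hne).
rewrite big1_seq; last first.
  by move=> m /= Hm; case: eqP => // He; rewrite He Hm in Hin.
by rewrite /G; move/negbT: Hin; rewrite -mcoeff_eq0 => /eqP ->; rewrite rmorph0 mul0r.
Qed.
End Conv.

Lemma mt_id (F : Type) (t : GRing.term F) : mt idfun t = t.
Proof. by elim: t => //= [t1 -> t2 ->|t1 ->|t1 -> k|t1 -> t2 ->|t1 ->|t1 -> k]. Qed.

Lemma nth_zs (A : nzRingType) n (z : 'I_n -> A) (i : 'I_n) :
  nth 0 (map z (enum 'I_n)) i = z i.
Proof. by rewrite (nth_map i) ?size_enum_ord // nth_ord_enum. Qed.

Lemma mmap_ext (R S : nzRingType) n (f : R -> S) (h1 h2 : 'I_n -> S) p :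
  h1 =1 h2 -> mmap f h1 p = mmap f h2 p.
Proof. by move=> H; apply: eq_bigr => m _; rewrite (mmap1_eq _ H). Qed.

Lemma AI (F K : fieldType) (iota : {rmorphism F -> K}) n (z : 'I_n -> K) :
  alg_indep iota z -> forall t, GRing.rterm t ->
  GRing.eval (map z (enum 'I_n)) (mt iota t) = 0 ->
  forall xs : seq F, size xs = n -> GRing.eval xs t = 0.
Proof.
move=> Hind t rt Hz xs Hxs.
have Hs : size (map z (enum 'I_n)) = n by rewrite size_map size_enum_ord.
rewrite (@evalP _ n _ _ _ _ Hs rt) in Hz.
rewrite (mmap_ext _ _ (h2 := z)) in Hz; last by move=> i; rewrite nth_zs.
rewrite -conv_meval in Hz.
have H0 := Hind _ _ Hz.
rewrite -(mt_id t) (@evalP F n F idfun xs t Hxs rt) -conv_meval H0 /meval.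
by rewrite big1 // => e _; rewrite ffunE mul0r.
Qed.

Fixpoint exblk (R : Type) (k s : nat) (g : GRing.formula R) : GRing.formula R :=
  if s is s'.+1 then GRing.Exists k (exblk k.+1 s' g) else g.

Lemma mf_exblk (R S : Type) (f : R -> S) k s g :
  mf f (exblk k s g) = exblk k s (mf f g).
Proof. by elim: s k => //= s IH k; rewrite IH. Qed.

Lemma set_nth_size (R : Type) (x0 : R) (e : seq R) v :
  set_nth x0 e (size e) v = rcons e v.
Proof. by elim: e => //= x e ->. Qed.

Lemma holds_exblk (R : unitRingType) s : forall k (e : seq R) g, size e = k ->
  (GRing.holds e (exblk k s g) <-> exists ys, size ys = s /\ GRing.holds (e ++ ys) g).
Proof.
elim: s => [|s IH] k e g He /=.
  split; first by move=> h; exists [::]; rewrite cats0.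
  by case=> ys [/size0nil -> h]; rewrite cats0 in h.
split.
  move=> /= [v]; rewrite -He set_nth_size => /(IH _ _ _ (size_rcons e v)) [ys [Hys h]].
  by exists (v :: ys); rewrite /= Hys -cat_rcons.
case=> -[|v ys] [/= Hys h] //=; exists v; rewrite -He set_nth_size.
by apply/(IH _ _ _ (size_rcons e v)); exists ys; rewrite cat_rcons; case: Hys.
Qed.

Lemma holds_foldr_and (R : unitRingType) (I : eqType) (P : I -> GRing.formula R) (s : seq I) e :
  GRing.holds e (foldr (fun i g => GRing.And (P i) g) (GRing.Bool true) s) <->
  (forall i, i \in s -> GRing.holds e (P i)).
Proof.
elim: s => [|x s IH] /=; first by split.
split.
  by case=> h1 /IH h2 i; rewrite inE => /orP[/eqP ->|/h2].
move=> h; split; first by apply: h; rewrite inE eqxx.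
by apply/IH => i Hi; apply: h; rewrite inE Hi orbT.
Qed.

Lemma mf_foldr_and (R S : Type) (f : R -> S) (I : Type) (P : I -> GRing.formula R) s :
  mf f (foldr (fun i g => GRing.And (P i) g) (GRing.Bool true) s) =
  foldr (fun i g => GRing.And (mf f (P i)) g) (GRing.Bool true) s.
Proof. by elim: s => //= x s ->. Qed.

Definition monoT (A : Type) k n D (e : {ffun 'I_n -> 'I_D.+1}) : GRing.term A :=
  \big[GRing.Mul/GRing.NatConst _ 1%N]_(j < n) GRing.Exp (GRing.Var _ (k + j)) (e j).

Definition polyTg (F A : Type) (g : F -> A) k n D (c : {ffun {ffun 'I_n -> 'I_D.+1} -> F}) :
  GRing.term A :=
  \big[GRing.Add/GRing.NatConst _ 0%N]_e GRing.Mul (GRing.Const (g (c e))) (monoT A k e).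

Lemma mt_polyTg (F A : Type) (g : F -> A) k n D (c : {ffun {ffun 'I_n -> 'I_D.+1} -> F}) :
  mt g (polyTg id k c) = polyTg g k c.
Proof.
rewrite /polyTg (@big_morph _ _ (mt g) (GRing.NatConst _ 0%N) GRing.Add
   (GRing.NatConst _ 0%N) GRing.Add (fun _ _ => erefl) erefl).
apply: eq_bigr => e _ /=; congr GRing.Mul.
by rewrite /monoT (@big_morph _ _ (mt g) (GRing.NatConst _ 1%N) GRing.Mul
   (GRing.NatConst _ 1%N) GRing.Mul (fun _ _ => erefl) erefl).
Qed.

Lemma rterm_polyTg (F A : unitRingType) (g : F -> A) k n D (c : {ffun {ffun 'I_n -> 'I_D.+1} -> F}) :
  GRing.rterm (polyTg g k c).
Proof.
rewrite /polyTg; apply: (big_ind (@GRing.rterm A)) => //= [x y -> ->|e _] //.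
rewrite /monoT; apply: (big_ind (@GRing.rterm A)) => //= x y -> ->.
by [].
Qed.

Lemma eval_polyTg (F A : fieldType) (g : F -> A) k n D
  (c : {ffun {ffun 'I_n -> 'I_D.+1} -> F}) (env : seq A) (w : 'I_n -> A) :
  (forall j : 'I_n, nth 0 env (k + j) = w j) ->
  GRing.eval env (polyTg g k c) = meval g c w.
Proof.
move=> Hw; rewrite /polyTg /meval.
rewrite (@big_morph _ _ (GRing.eval env) 0 +%R (GRing.NatConst _ 0%N) GRing.Add
   (fun _ _ => erefl) erefl).
apply: eq_bigr => e _ /=; congr (_ * _).
rewrite /monoT (@big_morph _ _ (GRing.eval env) 1 *%R (GRing.NatConst _ 1%N) GRing.Mul
   (fun _ _ => erefl) erefl).
by apply: eq_bigr => j _ /=; rewrite Hw.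
Qed.

Fixpoint atoms (R : Type) (g : GRing.formula R) : seq (GRing.term R) :=
  match g with
  | GRing.Equal t1 t2 => [:: GRing.Add t1 (GRing.Opp t2)]
  | GRing.Unit t => [:: t]
  | GRing.And a b | GRing.Or a b | GRing.Implies a b => atoms a ++ atoms b
  | GRing.Not a => atoms a
  | _ => [::]
  end.

Lemma atoms_eval (F K : fieldType) (iota : F -> K) (xs : seq F) (zs : seq K) g :
  all (fun t => (GRing.eval xs t == 0) == (GRing.eval zs (mt iota t) == 0)) (atoms g) ->
  GRing.qf_eval xs g = GRing.qf_eval zs (mf iota g).
Proof.
elim: g => //=.
- by move=> t1 t2; rewrite andbT => /eqP; rewrite !subr_eq0.
- by move=> t; rewrite andbT !unitfE => /eqP ->.
- by move=> a IHa b IHb; rewrite all_cat => /andP[/IHa -> /IHb ->].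
- by move=> a IHa b IHb; rewrite all_cat => /andP[/IHa -> /IHb ->].
- by move=> a IHa b IHb; rewrite all_cat => /andP[/IHa -> /IHb ->].
- by move=> a IHa /IHa ->.
Qed.

Lemma rformula_atoms (R : unitRingType) (g : GRing.formula R) :
  GRing.rformula g -> all (@GRing.rterm R) (atoms g).
Proof.
elim: g => //=.
- by move=> t1 t2 /andP[-> ->].
- by move=> a IHa b IHb /andP[/IHa Ha /IHb Hb]; rewrite all_cat Ha Hb.
- by move=> a IHa b IHb /andP[/IHa Ha /IHb Hb]; rewrite all_cat Ha Hb.
- by move=> a IHa b IHb /andP[/IHa Ha /IHb Hb]; rewrite all_cat Ha Hb.
Qed.

Lemma rformula_exblk (R : unitRingType) k s (g : GRing.formula R) :
  GRing.rformula (exblk k s g) = GRing.rformula g.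
Proof. by elim: s k => //= s IH k; rewrite IH. Qed.

Lemma eval_prodT (R : comUnitRingType) env (S : seq (GRing.term R)) :
  GRing.eval env (\big[GRing.Mul/GRing.NatConst _ 1%N]_(t <- S) t) =
  \prod_(t <- S) GRing.eval env t.
Proof. by elim: S => [|t S IH]; rewrite ?big_nil ?big_cons //= IH. Qed.

Lemma mt_prodT (R A : Type) (f : R -> A) (S : seq (GRing.term R)) :
  mt f (\big[GRing.Mul/GRing.NatConst _ 1%N]_(t <- S) t) =
  \big[GRing.Mul/GRing.NatConst _ 1%N]_(t <- map (mt f) S) t.
Proof. by elim: S => [|t S IH]; rewrite ?big_nil ?big_cons //= IH. Qed.

Theorem lemma9p3 (F : closedFieldType) (n m r d DL : nat)
  (L : 'I_m -> mpoly F n DL) :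
  ~ elusive L r d ->
  forall (K : closedFieldType) (iota : {rmorphism F -> K}) (z : 'I_n -> K),
    is_alg_closure_Fz iota z ->
    exists p : 'I_r -> K, forall i : 'I_m, dspan iota d p (meval iota (L i) z).
Proof.
move=> Hne K iota z [Hind _].
have [M [HM Him]] : exists M : 'I_m -> mpoly F r d,
    (forall i, deg_le (M i) d) /\ im_sub L M.
  apply: NNPP => H; apply: Hne => M HM Him; apply: H; by exists M.
pose P i : GRing.formula F :=
  GRing.Equal (polyTg id n (M i)) (polyTg id 0 (L i)).
pose conj := foldr (fun i g => GRing.And (P i) g) (GRing.Bool true) (enum 'I_m).
pose phi := exblk n r conj.
have rphi : GRing.rformula phi.
  rewrite /phi rformula_exblk /conj; elim: (enum 'I_m) => //= i s ->.
  by rewrite /P /= !rterm_polyTg.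
have Hall : forall xs : seq F, size xs = n -> GRing.holds xs phi.
  move=> xs Hxs; have [y Hy] := Him (fun i => nth 0 xs i).
  apply/(@holds_exblk _ r n xs conj Hxs); exists (map y (enum 'I_r)).
  split; first by rewrite size_map size_enum_ord.
  apply/holds_foldr_and => i _ /=.
  rewrite (eval_polyTg _ _ (w := y)); last first.
    by move=> j; rewrite nth_cat Hxs ltnNge leq_addr /= addKn nth_zs.
  rewrite (eval_polyTg _ _ (w := fun i => nth 0 xs i)); last first.
    by move=> j; rewrite add0n nth_cat Hxs ltn_ord.
  exact: Hy.
have HF := GRing.quantifier_elim_rformP (@ClosedFieldQE.wf_ex_elim F)
  (ClosedFieldQE.holds_ex_elim (@solve_monicpoly F)).
have HK := GRing.quantifier_elim_rformP (@ClosedFieldQE.wf_ex_elim K)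
  (ClosedFieldQE.holds_ex_elim (@solve_monicpoly K)).
pose psi := GRing.quantifier_elim (@ClosedFieldQE.ex_elim F) phi.
have Hpsi : forall xs : seq F, size xs = n -> GRing.qf_eval xs psi.
  by move=> xs Hxs; apply/(HF xs phi rphi)/Hall.
have /andP[_ rpsi] := GRing.quantifier_elim_wf (@ClosedFieldQE.wf_ex_elim F) rphi.
pose zs := map z (enum 'I_n).
have Hzs : size zs = n by rewrite size_map size_enum_ord.
have key : GRing.qf_eval zs (mf iota psi).
  pose S := filter (fun t => GRing.eval zs (mt iota t) != 0) (atoms psi).
  pose T := \big[GRing.Mul/GRing.NatConst _ 1%N]_(t <- S) t.
  have rS : all (@GRing.rterm F) S.
    by rewrite all_filter; apply: sub_all (rformula_atoms rpsi) => t rt /=; rewrite rt implybT.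
  have rT : GRing.rterm T.
    rewrite /T; move: rS; clear; elim: S => [|t S' IH] /=; first by rewrite big_nil.
    by rewrite big_cons /= => /andP[-> /IH].
  pose chi := exblk 0 n (GRing.Not (GRing.Equal T (GRing.NatConst _ 0%N))).
  have : GRing.holds [::] chi.
    have rchi : GRing.rformula chi by rewrite /chi rformula_exblk /= rT.
    apply/(transfer iota [::] rchi); rewrite /chi mf_exblk.
    apply/(@holds_exblk _ n 0 [::] _ erefl); exists zs; split => //=.
    rewrite mt_prodT eval_prodT big_map; apply/eqP.
    rewrite prodf_seq_neq0 all_filter; elim: (atoms psi) => //= t s0 ->; rewrite andbT; by case: (_ != 0).
  case/(@holds_exblk _ n 0 [::] _ erefl) => xs0 [Hs0 /= H0].
  rewrite -(atoms_eval (xs := xs0)); first exact: Hpsi.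
  have HT : \prod_(t <- S) GRing.eval xs0 t != 0.
    by apply/eqP; rewrite -eval_prodT.
  rewrite prodf_seq_neq0 all_filter in HT.
  move: HT (rformula_atoms rpsi); elim: (atoms psi) => //= t s0 IH.
  move=> /andP[h1 h2] /andP[rt rs]; rewrite IH // andbT.
  case Hz: (GRing.eval zs (mt iota t) == 0).
    by rewrite (AI Hind rt (eqP Hz) Hs0) eqxx.
  by move: h1; rewrite Hz /= => /negbTE ->.
have rphi' : GRing.rformula (mf iota phi) by rewrite rformula_nat.
have : GRing.holds zs (mf iota phi).
  by apply/(HK zs _ rphi'); rewrite -qe_nat.
rewrite /phi mf_exblk => /(@holds_exblk _ r n zs _ Hzs) [ys [Hys h]].
exists (fun j => nth 0 ys j) => i.
rewrite /conj mf_foldr_and in h.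
move/holds_foldr_and: h => /(_ i (mem_enum _ i)) /=.
rewrite !mt_polyTg (eval_polyTg _ _ (w := fun j => nth 0 ys j)); last first.
  by move=> j; rewrite nth_cat Hzs ltnNge leq_addr /= addKn.
rewrite (eval_polyTg _ _ (w := z)); last first.
  by move=> j; rewrite add0n nth_cat Hzs ltn_ord nth_zs.
by move=> Heq; exists (M i); split.
Qed.
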